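(* Let $\mathbf A$ be a pseudo-Kleene lattice. Then $\mathbf A$ is super-paraorthomodular if and only if $\mathbf A$ has no subalgebra isomorphic to $\mathbf B_6$, no subalgebra isomorphic to $\mathbf B_8$, and no subalgebra $\mathbf B$ admitting a congruence $\theta$ such that $\mathbf B/\theta\cong\mathbf B_8^*$ or $\mathbf B/\theta\cong\mathbf B_{10}$.
   Context: A pseudo-Kleene lattice is an algebra $(A,\land,\lor,{}',0,1)$ that is a bounded lattice with an antitone involution ${}'$ ($x\leq y\Rightarrow y'\leq x'$, $x''=x$) satisfying $x\land x'\leq y\lor y'$; subalgebras and congruences are with respect to $\land,\lor,{}',0,1$. It is super-paraorthomodular if for all $x,y$: (SP1) $x\leq y$ and $x'\land y=(x\land x')\lor(y\land y')$ imply $y\land(x\lor x')=x\lor(y\land y')$; (SP2) $x\leq y$ implies $(x\land x')\lor(y\land y')=(x'\land y)\land(x'\land y)'$. In all the following finite pseudo-Kleene lattices the involution maps $u\leftrightarrow u'$ and $0\leftrightarrow 1$, and the order is given by covering relations. $\mathbf B_6$: elements $0,x,y,y',x',1$ with $0\prec x\prec y\prec 1$ and $0\prec y'\prec x'\prec 1$. $\mathbf B_8$: elements $0,z',x,y,y',x',z,1$ with $0\prec z'$, $z'\prec x\prec y\prec z$, $z'\prec y'\prec x'\prec z$, $z\prec 1$. $\mathbf B_8^*$: elements $0,x,y,z,z',y',x',1$ with $0\prec x$, $0\prec y$, $x\prec z$, $y\prec z'$, $z\prec z'$, $z\prec y'$, $z'\prec x'$, $y'\prec 1$, $x'\prec 1$.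 $\mathbf B_{10}$: elements $0,x,y',m,a,a',x',y,m',1$ with $0\prec y'$, $0\prec m$, $0\prec x$, $y'\prec a'$, $m\prec a'$, $m\prec a$, $x\prec a$, $a'\prec x'$, $a'\prec m'$, $a\prec m'$, $a\prec y$, $x'\prec 1$, $m'\prec 1$, $y\prec 1$. *)

(* Defs.v *)
From mathcomp Require Import all_boot.
Set Implicit Arguments. Unset Strict Implicit. Unset Printing Implicit Defensive.

Record alg := Alg {
  acar :> Type;
  ameet : acar -> acar -> acar;
  ajoin : acar -> acar -> acar;
  ainv  : acar -> acar;
  abot  : acar;
  atop  : acar }.

Section AlgDefs.
Variable A : alg.
Local Notation "x ∧ y" := (ameet x y) (at level 40, left associativity).
Local Notation "x ∨ y" := (ajoin x y) (at level 50, left associativity).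
Local Notation "x '" := (ainv x) (at level 2).

Definition ale (x y : A) : Prop := x ∧ y = x.

Definition pseudo_kleene : Prop :=
  [/\ (forall x y : A, x ∧ y = y ∧ x), (forall x y : A, x ∨ y = y ∨ x),
      (forall x y z : A, x ∧ (y ∧ z) = (x ∧ y) ∧ z),
      (forall x y z : A, x ∨ (y ∨ z) = (x ∨ y) ∨ z) &
      (forall x y : A, x ∧ (x ∨ y) = x /\ x ∨ (x ∧ y) = x)] /\
  [/\ (forall x : A, ale (abot A) x), (forall x : A, ale x (atop A)),
      (forall x : A, x '' = x),
      (forall x y : A, ale x y -> ale (y ') (x ')) &
      (forall x y : A, ale (x ∧ x ') (y ∨ y '))].

Definition super_paraorthomodular : Prop :=
  (forall x y : A, ale x y -> x ' ∧ y = (x ∧ x ') ∨ (y ∧ y ') ->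
       y ∧ (x ∨ x ') = x ∨ (y ∧ y ')) /\
  (forall x y : A, ale x y ->
       (x ∧ x ') ∨ (y ∧ y ') = (x ' ∧ y) ∧ (x ' ∧ y) ').

Definition subalgebra (S : A -> Prop) : Prop :=
  [/\ forall x y, S x -> S y -> S (x ∧ y),
      forall x y, S x -> S y -> S (x ∨ y),
      forall x, S x -> S (x '), S (abot A) & S (atop A)].

Definition sub_iso (S : A -> Prop) (C : alg) : Prop :=
  exists f : C -> A,
    [/\ injective f, (forall a, S a <-> exists c, f c = a),
        (forall c d, f (ameet c d) = f c ∧ f d),
        (forall c d, f (ajoin c d) = f c ∨ f d) &
        [/\ (forall c, f (ainv c) = (f c) '),
            f (abot C) = abot A & f (atop C) = atop A]].

Definition has_subalgebra_iso (C : alg) : Prop :=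
  exists S, subalgebra S /\ sub_iso S C.

Definition congruence (S : A -> Prop) (th : A -> A -> Prop) : Prop :=
  [/\ (forall x, S x -> th x x),
      (forall x y, S x -> S y -> th x y -> th y x),
      (forall x y z, S x -> S y -> S z -> th x y -> th y z -> th x z),
      (forall x y u v, S x -> S y -> S u -> S v -> th x y -> th u v ->
          th (x ∧ u) (y ∧ v) /\ th (x ∨ u) (y ∨ v)) &
      (forall x y, S x -> S y -> th x y -> th (x ') (y '))].

(* (S)/th is isomorphic to C: presented as g = iso ∘ (canonical projection),
   i.e. a surjective homomorphism S -> C whose kernel is exactly th *)
Definition quot_iso (S : A -> Prop) (th : A -> A -> Prop) (C : alg) : Prop :=
  exists g : A -> C,
    [/\ (forall x y, S x -> S y -> (g x = g y <-> th x y)),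
        (forall c, exists x, S x /\ g x = c),
        (forall x y, S x -> S y -> g (x ∧ y) = ameet (g x) (g y)),
        (forall x y, S x -> S y -> g (x ∨ y) = ajoin (g x) (g y)) &
        [/\ (forall x, S x -> g (x ') = ainv (g x)),
            g (abot A) = abot C & g (atop A) = atop C]].

End AlgDefs.

Section FinLat.
Variable n : nat.   (* elements are 0, 1, ..., n *)
Variable covers : seq (nat * nat).
Definition elems : seq nat := iota 0 n.+1.
(* reflexive-transitive closure of the covering relation:
   the elements above x are those reachable from x in at most n cover steps *)
Definition fstep (R : seq nat) : seq nat :=
  undup (R ++ [seq c.2 | c <- covers & c.1 \in R]).
Definition fle (x y : nat) : bool := y \in iter n fstep [:: x].
Definition fmeetn (x y : nat) : nat :=
  nth 0 [seq z <- elems | [&& fle z x, fle z y &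
                  all (fun w => (fle w x && fle w y) ==> fle w z) elems]] 0.
Definition fjoinn (x y : nat) : nat :=
  nth 0 [seq z <- elems | [&& fle x z, fle y z &
                  all (fun w => (fle x w && fle y w) ==> fle z w) elems]] 0.
Definition fmeet (x y : 'I_n.+1) : 'I_n.+1 := inord (fmeetn x y).
Definition fjoin (x y : 'I_n.+1) : 'I_n.+1 := inord (fjoinn x y).
(* elements are listed so that the involution is i |-> n - i *)
Definition finalg : alg :=
  @Alg 'I_n.+1 fmeet fjoin (@rev_ord n.+1) ord0 ord_max.
End FinLat.

(* B6: 0=0, 1=x, 2=y, 3=y', 4=x', 5=1 *)
Definition B6 : alg :=
  finalg 5 [:: (0,1); (1,2); (2,5); (0,3); (3,4); (4,5)].

(* B8: 0=0, 1=z', 2=x, 3=y, 4=y', 5=x', 6=z, 7=1 *)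
Definition B8 : alg :=
  finalg 7 [:: (0,1); (1,2); (2,3); (3,6); (1,4); (4,5); (5,6); (6,7)].

(* B8*: 0=0, 1=x, 2=y, 3=z, 4=z', 5=y', 6=x', 7=1 *)
Definition B8s : alg :=
  finalg 7 [:: (0,1); (0,2); (1,3); (2,4); (3,4); (3,5); (4,6); (5,7); (6,7)].

(* B10: 0=0, 1=x, 2=y', 3=m, 4=a, 5=a', 6=m', 7=y, 8=x', 9=1 *)
Definition B10 : alg :=
  finalg 9 [:: (0,2); (0,3); (0,1); (2,5); (3,5); (3,4); (1,4); (5,8); (5,6);
               (4,6); (4,7); (8,9); (6,9); (7,9)].

(* Main.v *)
Require Import Defs.
From mathcomp Require Import all_boot.
From Stdlib Require Import Classical ClassicalEpsilon.
Set Implicit Arguments. Unset Strict Implicit. Unset Printing Implicit Defensive.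

Section Lat.
Variable A : alg.
Hypothesis PK : pseudo_kleene A.
Local Notation "x ∧ y" := (ameet x y) (at level 40, left associativity).
Local Notation "x ∨ y" := (ajoin x y) (at level 50, left associativity).
Local Notation "x '" := (ainv x) (at level 2).
Local Notation le := (@ale A).

Lemma mC (x y : A) : x ∧ y = y ∧ x. Proof. by case: PK => [[]]. Qed.
Lemma jC (x y : A) : x ∨ y = y ∨ x. Proof. by case: PK => [[]]. Qed.
Lemma mA (x y z : A) : x ∧ (y ∧ z) = x ∧ y ∧ z. Proof. by case: PK => [[]]. Qed.
Lemma jA (x y z : A) : x ∨ (y ∨ z) = x ∨ y ∨ z. Proof. by case: PK => [[]]. Qed.
Lemma absm (x y : A) : x ∧ (x ∨ y) = x. Proof. by case: PK => [[_ _ _ _ H] _]; case: (H x y) => H1 H2. Qed.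
Lemma absj (x y : A) : x ∨ (x ∧ y) = x. Proof. by case: PK => [[_ _ _ _ H] _]; case: (H x y) => H1 H2. Qed.
Lemma invK (x : A) : x '' = x. Proof. by case: PK => [_ []]. Qed.
Lemma inv_le (x y : A) : le x y -> le (y ') (x '). Proof. by case: PK => [_ [_ _ _ H _]]; apply: H. Qed.
Lemma bot_le (x : A) : le (abot A) x. Proof. by case: PK => [_ [H _ _ _ _]]; apply: H. Qed.
Lemma le_top (x : A) : le x (atop A). Proof. by case: PK => [_ [_ H _ _ _]]; apply: H. Qed.
Lemma kleene (x y : A) : le (x ∧ x ') (y ∨ y '). Proof. by case: PK => [_ [_ _ _ _ H]]; apply: H. Qed.

Lemma mI (x : A) : x ∧ x = x.
Proof. by rewrite -{2}(absj x x) absm. Qed.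
Lemma jI (x : A) : x ∨ x = x.
Proof. by rewrite -{2}(absm x x) absj. Qed.
Lemma le_refl (x : A) : le x x. Proof. exact: mI. Qed.
Lemma le_trans (x y z : A) : le x y -> le y z -> le x z.
Proof. rewrite /ale => H1 H2. by rewrite -H1 -mA H2. Qed.
Lemma le_anti (x y : A) : le x y -> le y x -> x = y.
Proof. rewrite /ale => H1 H2. by rewrite -H1 mC H2. Qed.
Lemma leJ (x y : A) : le x y <-> x ∨ y = y.
Proof.
rewrite /ale; split=> H.
  by rewrite -H jC mC absj.
by rewrite -H absm.
Qed.
Lemma m_l (x y : A) : le (x ∧ y) x.
Proof. by rewrite /ale -mA (mC y x) mA mI. Qed.
Lemma m_r (x y : A) : le (x ∧ y) y.
Proof. by rewrite mC; apply: m_l. Qed.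
Lemma j_l (x y : A) : le x (x ∨ y).
Proof. exact: absm. Qed.
Lemma j_r (x y : A) : le y (x ∨ y).
Proof. by rewrite jC; apply: j_l. Qed.
Lemma m_glb (x y z : A) : le z x -> le z y -> le z (x ∧ y).
Proof. rewrite /ale => H1 H2. by rewrite mA H1 H2. Qed.
Lemma j_lub (x y z : A) : le x z -> le y z -> le (x ∨ y) z.
Proof. move=> /leJ H1 /leJ H2; apply/leJ. by rewrite -jA H2 H1. Qed.
Lemma inv_leE (x y : A) : le (y ') (x ') -> le x y.
Proof. move/inv_le. by rewrite !invK. Qed.
Lemma inv_m (x y : A) : (x ∧ y) ' = x ' ∨ y '.
Proof.
apply: le_anti.
  apply: inv_leE; rewrite invK; apply: m_glb.
    apply: inv_leE; rewrite invK; exact: j_l.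
  apply: inv_leE; rewrite invK; exact: j_r.
apply: j_lub; apply: inv_le; [exact: m_l | exact: m_r].
Qed.
Lemma inv_j (x y : A) : (x ∨ y) ' = x ' ∧ y '.
Proof. by rewrite -{1}(invK x) -{1}(invK y) -inv_m invK. Qed.
Lemma inv0 : (abot A) ' = atop A.
Proof. apply: le_anti; first exact: le_top. apply: inv_leE; rewrite invK; exact: bot_le. Qed.
Lemma inv1 : (atop A) ' = abot A.
Proof. by rewrite -inv0 invK. Qed.
Lemma m1 (x : A) : x ∧ atop A = x. Proof. exact: le_top. Qed.
Lemma m0 (x : A) : x ∧ abot A = abot A. Proof. by rewrite mC; exact: bot_le. Qed.
Lemma j0 (x : A) : x ∨ abot A = x. Proof. by rewrite jC; apply/leJ; exact: bot_le. Qed.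
Lemma j1 (x : A) : x ∨ atop A = atop A. Proof. by apply/leJ; exact: le_top. Qed.
Lemma le_eq (x y : A) : x = y -> le x y. Proof. by move=> ->; apply: le_refl. Qed.
Lemma m_mono (x1 x2 y1 y2 : A) : le x1 x2 -> le y1 y2 -> le (x1 ∧ y1) (x2 ∧ y2).
Proof. move=> H1 H2; apply: m_glb; [apply: le_trans (m_l _ _) H1 | apply: le_trans (m_r _ _) H2]. Qed.
Lemma j_mono (x1 x2 y1 y2 : A) : le x1 x2 -> le y1 y2 -> le (x1 ∨ y1) (x2 ∨ y2).
Proof. move=> H1 H2; apply: j_lub; [apply: le_trans H1 (j_l _ _) | apply: le_trans H2 (j_r _ _)]. Qed.
Lemma le_ml (x y z : A) : le x z -> le (x ∧ y) z. Proof. move=> H; exact: le_trans (m_l _ _) H. Qed.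
Lemma le_mr (x y z : A) : le y z -> le (x ∧ y) z. Proof. move=> H; exact: le_trans (m_r _ _) H. Qed.
Lemma le_jl (x y z : A) : le z x -> le z (x ∨ y). Proof. move=> H; exact: le_trans H (j_l _ _). Qed.
Lemma le_jr (x y z : A) : le z y -> le z (x ∨ y). Proof. move=> H; exact: le_trans H (j_r _ _). Qed.
End Lat.

Ltac lsolve P n :=
  lazymatch n with
  | O => fail
  | S ?m =>
  first
  [ apply: (le_refl P)
  | apply: (bot_le P)
  | apply: (le_top P)
  | assumption
  | (lazymatch goal with
    | |- ale (ajoin _ _) _ => apply: (j_lub P); [lsolve P n | lsolve P n]
    | |- ale _ (ameet _ _) => apply: (m_glb P); [lsolve P n | lsolve P n]
    end)
  | (apply: (le_ml P); lsolve P m)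
  | (apply: (le_mr P); lsolve P m)
  | (apply: (le_jl P); lsolve P m)
  | (apply: (le_jr P); lsolve P m)
  | (match goal with
    | H : ale ?x _ |- ale ?x _ => apply: (le_trans P H); lsolve P m
    | H : ale _ ?z |- ale _ ?z => apply: (le_trans P _ H); lsolve P m
    end)
  ]
  end.
Ltac ls := match goal with P : pseudo_kleene _ |- _ => lsolve P 6 end.
Ltac leq := match goal with P : pseudo_kleene _ |- _ => apply: (le_anti P); lsolve P 6 end.

Definition pb (P : Prop) : bool := if excluded_middle_informative P then true else false.
Lemma pbP (P : Prop) : reflect P (pb P).
Proof. rewrite /pb; case: excluded_middle_informative => H; by constructor. Qed.

Fixpoint allb (m : nat) : seq (seq bool) :=
  if m is m'.+1 then [seq c.1 :: c.2 | c <- [seq (x, l) | x <- [:: true; false], l <- allb m']]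
  else [:: [::]].
Lemma allbP m (l : seq bool) : size l = m -> l \in allb m.
Proof.
elim: m l => [|m IH] [|x l] //= [Hs].
apply/mapP; exists (x, l) => //.
rewrite /= mem_cat; case: x.
  by apply/orP; left; apply/mapP; exists l => //; apply: IH.
by apply/orP; right; rewrite cats0; apply/mapP; exists l => //; apply: IH.
Qed.

Lemma all_iotaP (P : pred nat) n : all P (iota 0 n) -> forall a, a < n -> P a.
Proof. move/allP => H a Ha; apply: H; by rewrite mem_iota. Qed.

Section Quot.
Variables (A : alg) (PK : pseudo_kleene A).
Local Notation "x ∧ y" := (ameet x y) (at level 40, left associativity).
Local Notation "x ∨ y" := (ajoin x y) (at level 50, left associativity).
Local Notation "x '" := (ainv x) (at level 2).

Variables (n : nat) (cv : seq (nat * nat)) (cm cj : nat -> nat -> nat).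
Local Notation ci a := (n - a).
Definition leC a b := cm a b == a.
Variables (m : nat) (jl : nat -> nat) (b : nat -> A) (rules : seq (nat * seq nat))
  (gens : seq (nat * nat)).

Definition prof (s : A) : seq bool := mkseq (fun k => pb (ale (b k) s)) m.
Definition Jn (p : seq bool) : nat := foldr cj 0 [seq jl k | k <- iota 0 m & nth false p k].
Definition closedp (p : seq bool) :=
  all (fun r => all (nth false p) r.2 ==> nth false p r.1) rules.
Definition pm (p q : seq bool) := mkseq (fun k => nth false p k && nth false q k) m.
Definition sepC (p q : seq bool) :=
  all (fun k => all (fun h => (nth false p k && nth false q h) ==> leC (jl k) (ci (jl h)))
     (iota 0 m)) (iota 0 m).
Definition clstep (l : seq nat) : seq nat :=
  undup (l ++ [seq cm x.1 x.2 | x <- [seq (x, y) | x <- l, y <- l]] ++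
     [seq cj x.1 x.2 | x <- [seq (x, y) | x <- l, y <- l]] ++ [seq ci x | x <- l]).

Definition chk1 := all (fun p => all (fun q => closedp p ==> closedp q ==>
          (Jn (pm p q) == cm (Jn p) (Jn q))) (allb m)) (allb m).
Definition chk2 := all (fun p => all (fun q => closedp p ==> closedp q ==> sepC p q ==>
          leC (Jn p) (ci (Jn q))) (allb m)) (allb m).
Definition chk3 := Jn (nseq m true) == n.
Definition chk4 := all (fun p => all (fun k => nth false p k ==> leC (jl k) (Jn p)) (iota 0 m)) (allb m).
Definition chk5 := all (fun p => Jn p <= n) (allb m).
Definition chk6 := all (fun r => r.1 < m) rules.
Definition chk7 := all (fun g => (g.1 < m) && (g.2 < m) && (ci (jl g.1) == jl g.2) && (jl g.1 <= n)) gens.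
Definition chk8 := all (fun x => x \in iter 3 clstep [seq jl g.1 | g <- gens]) (iota 0 n.+1).
Definition chk9 := all (fun a => all (fun b => [&& cm a b <= n, cj a b <= n, cm a b == cm b a,
          cj a b == ci (cm (ci a) (ci b)) &
          (cm a b == a) ==> (cm (ci b) (ci a) == ci b)]) (iota 0 n.+1)) (iota 0 n.+1).
Definition chk10 := all (fun a => all (fun b => all (fun c => cm a (cm b c) == cm (cm a b) c)
          (iota 0 n.+1)) (iota 0 n.+1)) (iota 0 n.+1).
Definition chk11 := all (fun a => cm a 0 == 0) (iota 0 n.+1).
Definition chk12 := all (fun a => all (fun b => (fmeetn n cv a b == cm a b) && (fjoinn n cv a b == cj a b))
          (iota 0 n.+1)) (iota 0 n.+1).
Hypotheses (CH1 : chk1) (CH2 : chk2) (CH3 : chk3) (CH4 : chk4) (CH5 : chk5) (CH6 : chk6)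
  (CH7 : chk7) (CH8 : chk8) (CH9 : chk9) (CH10 : chk10) (CH11 : chk11) (CH12 : chk12).
Hypothesis HR : forall r s, r \in rules -> (forall l, l \in r.2 -> ale (b l) s) -> ale (b r.1) s.
Hypothesis HS : forall k h, k < m -> h < m -> ~~ leC (jl k) (ci (jl h)) -> ~ ale (b k) (ainv (b h)).
Hypothesis HG : forall g, g \in gens -> ale (b g.2) (ainv (b g.1)).

Lemma size_prof s : size (prof s) = m. Proof. by rewrite size_mkseq. Qed.
Lemma nth_prof s k : k < m -> nth false (prof s) k = pb (ale (b k) s).
Proof. by move=> H; rewrite nth_mkseq. Qed.
Lemma nth_prof_ge s k : m <= k -> nth false (prof s) k = false.
Proof. by move=> H; rewrite nth_default // size_prof. Qed.

Lemma K1 p q : size p = m -> size q = m -> closedp p -> closedp q -> Jn (pm p q) = cm (Jn p) (Jn q).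
Proof.
move=> Hp Hq Cp Cq; move/allP: CH1 => H.
move/allP: (H p (allbP Hp)) => /(_ q (allbP Hq)); rewrite Cp Cq /=; by move/eqP.
Qed.
Lemma K2 p q : size p = m -> size q = m -> closedp p -> closedp q -> sepC p q -> leC (Jn p) (ci (Jn q)).
Proof.
move=> Hp Hq Cp Cq Sp; move/allP: CH2 => H.
move/allP: (H p (allbP Hp)) => /(_ q (allbP Hq)); by rewrite Cp Cq Sp.
Qed.
Lemma K3 : Jn (nseq m true) = n.
Proof. by apply/eqP. Qed.
Lemma K4 p k : size p = m -> k < m -> nth false p k -> leC (jl k) (Jn p).
Proof.
move=> Hp Hk Hn; move/allP: CH4 => H.
by move: (all_iotaP (H p (allbP Hp)) Hk); rewrite Hn.
Qed.
Lemma K5 p : size p = m -> Jn p <= n.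
Proof. move=> Hp; move/allP: CH5 => H; exact: H _ (allbP Hp). Qed.
Lemma K6 r : r \in rules -> r.1 < m.
Proof. move=> Hr; move/allP: CH6 => H; exact: H. Qed.
Lemma K7 g : g \in gens -> [/\ g.1 < m, g.2 < m, ci (jl g.1) = jl g.2 & jl g.1 <= n].
Proof.
move=> Hg; move/allP: CH7 => H.
by case/andP: (H g Hg) => /andP [/andP [-> ->] /eqP ->] ->.
Qed.
Lemma K8 x : x <= n -> x \in iter 3 clstep [seq jl g.1 | g <- gens].
Proof. move=> Hx; move/allP: CH8 => H; apply: H; by rewrite mem_iota. Qed.
Lemma CL1 x y : x <= n -> y <= n -> [/\ cm x y <= n, cj x y <= n, cm x y = cm y x,
          cj x y = ci (cm (ci x) (ci y)) & cm x y = x -> cm (ci y) (ci x) = ci y].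
Proof.
move=> Hx Hy; move: (all_iotaP (all_iotaP CH9 Hx) Hy) => /and5P [-> -> /eqP -> /eqP -> /implyP H].
by split => // E; apply/eqP; apply: H; apply/eqP.
Qed.
Lemma CL2 x y z : x <= n -> y <= n -> z <= n -> cm x (cm y z) = cm (cm x y) z.
Proof. move=> Hx Hy Hz; apply/eqP; exact: (all_iotaP (all_iotaP (all_iotaP CH10 Hx) Hy) Hz). Qed.
Lemma CL3 x : x <= n -> cm x 0 = 0.
Proof. move=> Hx; apply/eqP; exact: (all_iotaP CH11 Hx). Qed.
Lemma CL4 x y : x <= n -> y <= n -> fmeetn n cv x y = cm x y /\ fjoinn n cv x y = cj x y.
Proof. move=> Hx Hy; by case/andP: (all_iotaP (all_iotaP CH12 Hx) Hy) => /eqP -> /eqP ->. Qed.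

Lemma le_meetE (z s t : A) : ale z (s ∧ t) <-> ale z s /\ ale z t.
Proof.
split; first by move=> H; split; apply: (le_trans PK H); [apply: m_l | apply: m_r].
by case=> H1 H2; apply: m_glb.
Qed.

Definition up s := Jn (prof s).
Definition dn s := ci (up (ainv s)).

Lemma prof_meet s t : prof (s ∧ t) = pm (prof s) (prof t).
Proof.
apply: (@eq_from_nth _ false); rewrite ?size_prof ?size_mkseq // => k Hk.
rewrite /pm nth_mkseq // !nth_prof //.
case: (pbP (ale (b k) s)) => H1; case: (pbP (ale (b k) t)) => H2 /=.
- by apply/pbP; apply/le_meetE.
- by apply/negbTE/pbP => /le_meetE [].
- by apply/negbTE/pbP => /le_meetE [].
- by apply/negbTE/pbP => /le_meetE [].
Qed.

Lemma closed_prof s : closedp (prof s).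
Proof.
apply/allP => r Hr; apply/implyP => /allP Hall.
have Hm := K6 Hr.
rewrite nth_prof //; apply/pbP; apply: HR => // l Hl.
move: (Hall l Hl); case: (ltnP l m) => Hlm; last by rewrite nth_prof_ge.
by rewrite nth_prof // => /pbP.
Qed.

Lemma upM s t : up (s ∧ t) = cm (up s) (up t).
Proof. by rewrite /up prof_meet K1 // ?size_prof //; apply: closed_prof. Qed.

Lemma up_le s : up s <= n.
Proof. apply: K5; exact: size_prof. Qed.

Lemma up_mono s t : ale s t -> leC (up s) (up t).
Proof. move=> H; by rewrite /leC -upM H. Qed.

Lemma sep_prof s : sepC (prof s) (prof (ainv s)).
Proof.
apply/allP => k; rewrite mem_iota => /andP [_ Hk] /=.
apply/allP => h; rewrite mem_iota => /andP [_ Hh] /=.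
rewrite !nth_prof //; apply/implyP => /andP [/pbP H1 /pbP H2].
apply/negPn/negP => Hn; apply: (HS Hk Hh Hn).
apply: (le_trans PK H1); apply: (inv_leE PK); rewrite !invK //.
Qed.

Lemma up_dn s : leC (up s) (dn s).
Proof. apply: K2; rewrite ?size_prof //; try apply: closed_prof; exact: sep_prof. Qed.

Lemma leC_anti x y : x <= n -> y <= n -> leC x y -> leC y x -> x = y.
Proof. move=> Hx Hy /eqP H1 /eqP H2. case: (CL1 Hx Hy) => _ _ E _ _. by rewrite -H1 E H2. Qed.
Lemma leC_trans x y z : x <= n -> y <= n -> z <= n -> leC x y -> leC y z -> leC x z.
Proof. move=> Hx Hy Hz /eqP H1 /eqP H2; apply/eqP. by rewrite -H1 -CL2 // H2. Qed.
Lemma leC_glb x y z : x <= n -> y <= n -> z <= n -> leC z x -> leC z y -> leC z (cm x y).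
Proof. move=> Hx Hy Hz /eqP H1 /eqP H2; apply/eqP. by rewrite CL2 // H1 H2. Qed.
Lemma ciK x : x <= n -> ci (ci x) = x.
Proof. move=> H; by rewrite subKn. Qed.
Lemma ci_le x : ci x <= n. Proof. exact: leq_subr. Qed.
Lemma leC_inv x y : x <= n -> y <= n -> leC x y -> leC (ci y) (ci x).
Proof. move=> Hx Hy /eqP H; apply/eqP; by case: (CL1 Hx Hy) => _ _ _ _ ->. Qed.

Definition SS s := up s = dn s.
Lemma dn_le s : dn s <= n. Proof. exact: ci_le. Qed.

Lemma SS_meet s t : SS s -> SS t -> SS (s ∧ t).
Proof.
rewrite /SS => Hs Ht.
have E : up (s ∧ t) = cm (dn s) (dn t) by rewrite upM Hs Ht.
apply: leC_anti; rewrite ?up_le ?dn_le //; first exact: up_dn.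
rewrite E; apply: leC_glb; rewrite ?dn_le //.
- rewrite /dn; apply: leC_inv; rewrite ?up_le //; apply: up_mono.
  rewrite (inv_m PK); exact: j_l.
- rewrite /dn; apply: leC_inv; rewrite ?up_le //; apply: up_mono.
  rewrite (inv_m PK); exact: j_r.
Qed.

Lemma upI s : SS s -> up (s ') = ci (up s).
Proof. rewrite /SS => ->. by rewrite /dn ciK // up_le. Qed.

Lemma SS_inv s : SS s -> SS (s ').
Proof. move=> Hs; by rewrite /SS upI // /dn invK. Qed.

Lemma join_dm (s t : A) : s ∨ t = ((s ') ∧ (t ')) '.
Proof. by rewrite (inv_m PK) !invK. Qed.

Lemma SS_join s t : SS s -> SS t -> SS (s ∨ t).
Proof. move=> Hs Ht; rewrite join_dm; apply: SS_inv; apply: SS_meet; exact: SS_inv. Qed.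

Lemma up_top : up (atop A) = n.
Proof.
rewrite /up -K3; congr Jn.
apply: (@eq_from_nth _ false); rewrite ?size_prof ?size_nseq // => k Hk.
rewrite nth_prof // nth_nseq Hk; apply/pbP; exact: le_top.
Qed.

Lemma up_bot : up (abot A) = 0.
Proof.
have H := up_dn (abot A).
rewrite /dn (inv0 PK) up_top subnn in H.
move/eqP: H; by rewrite CL3 // up_le.
Qed.

Lemma SS0 : SS (abot A).
Proof. by rewrite /SS /dn up_bot (inv0 PK) up_top subnn. Qed.

Lemma upJ s t : SS s -> SS t -> up (s ∨ t) = cj (up s) (up t).
Proof.
move=> Hs Ht; have := SS_join Hs Ht; rewrite /SS => ->.
rewrite /dn (inv_j PK) upM !upI //.
by case: (CL1 (up_le s) (up_le t)) => _ _ _ -> _.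
Qed.

Definition RR c := exists s, SS s /\ up s = c.

Lemma RR_gen g : g \in gens -> RR (jl g.1).
Proof.
move=> Hg; case: (K7 Hg) => H1 H2 E Hj.
have Hj2 : jl g.2 <= n by rewrite -E; exact: ci_le.
exists (b g.1).
have L1 : leC (jl g.1) (up (b g.1)).
  apply: K4 => //; first exact: size_prof.
  rewrite nth_prof //; apply/pbP; exact: le_refl.
have L2 : leC (jl g.2) (up (ainv (b g.1))).
  apply: K4 => //; first exact: size_prof.
  rewrite nth_prof //; apply/pbP; exact: HG.
have L3 : leC (dn (b g.1)) (jl g.1).
  rewrite /dn -(ciK Hj) E; apply: leC_inv => //; exact: up_le.
have U : up (b g.1) = jl g.1.
  apply: leC_anti => //; first exact: up_le.
  apply: leC_trans L3; rewrite ?up_le ?dn_le //; exact: up_dn.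
split => //; rewrite /SS U; apply: leC_anti => //; first exact: dn_le.
  by rewrite -U; apply: up_dn.
Qed.

Lemma RR_le c : RR c -> c <= n.
Proof. by case=> s [_ <-]; apply: up_le. Qed.

Lemma RR_meet x y : RR x -> RR y -> RR (cm x y).
Proof. case=> s [Hs <-] [t [Ht <-]]; exists (s ∧ t); split; [exact: SS_meet | exact: upM]. Qed.
Lemma RR_join x y : RR x -> RR y -> RR (cj x y).
Proof. case=> s [Hs <-] [t [Ht <-]]; exists (s ∨ t); split; [exact: SS_join | exact: upJ]. Qed.
Lemma RR_inv x : RR x -> RR (ci x).
Proof. case=> s [Hs <-]; exists (s '); split; [exact: SS_inv | exact: upI]. Qed.

Lemma RR_step l : (forall x, x \in l -> RR x) -> forall x, x \in clstep l -> RR x.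
Proof.
move=> H x; rewrite mem_undup !mem_cat => /or4P [].
- exact: H.
- case/mapP => [[p q]] /allpairsP [[p' q']] [/= Hp Hq [-> ->]] ->.
  apply: RR_meet; exact: H.
- case/mapP => [[p q]] /allpairsP [[p' q']] [/= Hp Hq [-> ->]] ->.
  apply: RR_join; exact: H.
- case/mapP => p Hp ->; apply: RR_inv; exact: H.
Qed.

Lemma RR_all c : c <= n -> RR c.
Proof.
move=> Hc; move: (K8 Hc); move: 3 c {Hc}; elim => [|k IH] c /=.
  by case/mapP => g Hg ->; apply: RR_gen.
apply: RR_step => x; exact: IH.
Qed.

Lemma quot_main : exists (S : A -> Prop) (th : A -> A -> Prop), [/\ subalgebra S, congruence S th & quot_iso S th (finalg n cv)].
Proof.
exists SS, (fun x y => up x = up y).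
have Hup : forall s, up s < n.+1 by move=> s; rewrite ltnS up_le.
have iK : forall s, @inord n (up s) = up s :> nat by move=> s; rewrite inordK.
split.
- split.
  + exact: SS_meet.
  + exact: SS_join.
  + exact: SS_inv.
  + exact: SS0.
  + rewrite -(inv0 PK); apply: SS_inv; exact: SS0.
- split.
  + by [].
  + by move=> x y _ _ E; rewrite E.
  + by move=> x y z _ _ _ E1 E2; rewrite E1 E2.
  + move=> x y u v Hx Hy Hu Hv E1 E2; split; first by rewrite !upM E1 E2.
    by rewrite !upJ // E1 E2.
  + move=> x y Hx Hy E; by rewrite !upI // E.
- exists (fun s => @inord n (up s)); split.
  + move=> x y Hx Hy; split; last by move=> ->.
    by move/(congr1 val); rewrite /= !iK.
  + move=> c; case: (RR_all (ltn_ord c : val c <= n)) => s [Hs E].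
    exists s; split => //; apply: val_inj; by rewrite /= iK E.
  + move=> x y Hx Hy; apply: val_inj; rewrite /= /fmeet !iK; case: (CL4 (up_le x) (up_le y)) => -> _; by rewrite -upM iK.
  + move=> x y Hx Hy; apply: val_inj; rewrite /= /fjoin !iK; case: (CL4 (up_le x) (up_le y)) => _ ->; by rewrite -upJ // iK.
  + split.
    * move=> x Hx; apply: val_inj; rewrite /= !iK upI // inordK ?subSS //.
    * apply: val_inj => /=; rewrite inordK up_bot //; by rewrite -up_bot.
    * apply: val_inj => /=; rewrite inordK up_top //; by rewrite -{1}up_top.
Qed.
End Quot.

Definition cv8s := [:: (0,1); (0,2); (1,3); (2,4); (3,4); (3,5); (4,6); (5,7); (6,7)].
Definition TM8s := Eval vm_compute in [seq [seq fmeetn 7 cv8s i j | j <- iota 0 8] | i <- iota 0 8].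
Definition TJ8s := Eval vm_compute in [seq [seq fjoinn 7 cv8s i j | j <- iota 0 8] | i <- iota 0 8].
Definition cm8s a b := nth 0 (nth [::] TM8s a) b.
Definition cj8s a b := nth 0 (nth [::] TJ8s a) b.
Definition jl8s k := nth 0 [:: 1; 2; 3; 5; 6] k.
Definition rules8s : seq (nat * seq nat) :=
  [:: (0,[::2]); (0,[::3]); (0,[::4]); (2,[::3]); (2,[::4]); (1,[::4]); (2,[::0;1]); (4,[::1;3])].
Definition gens8s : seq (nat * nat) := [:: (0,4); (3,1)].
Definition cv10 := [:: (0,2); (0,3); (0,1); (2,5); (3,5); (3,4); (1,4); (5,8); (5,6);
               (4,6); (4,7); (8,9); (6,9); (7,9)].
Definition TM10 := Eval vm_compute in [seq [seq fmeetn 9 cv10 i j | j <- iota 0 10] | i <- iota 0 10].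
Definition TJ10 := Eval vm_compute in [seq [seq fjoinn 9 cv10 i j | j <- iota 0 10] | i <- iota 0 10].
Definition cm10 a b := nth 0 (nth [::] TM10 a) b.
Definition cj10 a b := nth 0 (nth [::] TJ10 a) b.
Definition jl10 k := nth 0 [:: 1; 2; 3; 7; 8] k.
Definition rules10 : seq (nat * seq nat) :=
  [:: (0,[::3]); (2,[::3]); (1,[::4]); (2,[::4]); (2,[::0;1]); (3,[::0;4]); (4,[::3;1])].
Definition gens10 : seq (nat * nat) := [:: (0,4); (3,1)].
Definition cv6 := [:: (0,1); (1,2); (2,5); (0,3); (3,4); (4,5)].
Definition TM6 := Eval vm_compute in [seq [seq fmeetn 5 cv6 i j | j <- iota 0 6] | i <- iota 0 6].
Definition TJ6 := Eval vm_compute in [seq [seq fjoinn 5 cv6 i j | j <- iota 0 6] | i <- iota 0 6].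
Definition cm6 a b := nth 0 (nth [::] TM6 a) b.
Definition cj6 a b := nth 0 (nth [::] TJ6 a) b.
Definition cv8 := [:: (0,1); (1,2); (2,3); (3,6); (1,4); (4,5); (5,6); (6,7)].
Definition TM8 := Eval vm_compute in [seq [seq fmeetn 7 cv8 i j | j <- iota 0 8] | i <- iota 0 8].
Definition TJ8 := Eval vm_compute in [seq [seq fjoinn 7 cv8 i j | j <- iota 0 8] | i <- iota 0 8].
Definition cm8 a b := nth 0 (nth [::] TM8 a) b.
Definition cj8 a b := nth 0 (nth [::] TJ8 a) b.

Definition allPl (P : nat -> nat -> Prop) (l : seq (nat * nat)) : Prop :=
  foldr (fun kh acc => P kh.1 kh.2 /\ acc) True l.
Lemma allPlP P l : allPl P l -> forall kh, kh \in l -> P kh.1 kh.2.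
Proof.
elim: l => [|[k h] l IH] //= [H1 H2] [k' h']; rewrite inE => /orP [/eqP [-> ->] //|]; exact: IH.
Qed.
Definition allRl (A : alg) (b : nat -> A) (l : seq (nat * seq nat)) : Prop :=
  foldr (fun r acc => ale (b r.1) (foldr (@ajoin A) (abot A) (map b r.2)) /\ acc) True l.

Section Gen.
Variable A : alg. Hypothesis PK : pseudo_kleene A.
Lemma HR_of (b : nat -> A) rules : allRl b rules ->
  forall r s, r \in rules -> (forall l, l \in r.2 -> ale (b l) s) -> ale (b r.1) s.
Proof.
elim: rules => [|r0 rs IH] /=; first by move=> _ r s.
move=> [H1 H2] r s; rewrite inE => /orP [/eqP -> | Hr] Hl; last exact: IH.
apply: (le_trans PK H1); move: Hl; elim: (r0.2) => [|x xs IHx] Hl /=; first exact: (bot_le PK).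
apply: (j_lub PK); [apply: Hl; exact: mem_head | apply: IHx => l Hl'; apply: Hl; by rewrite inE Hl' orbT].
Qed.

Lemma HS_of n cm m jl (b : nat -> A) (l : seq (nat * nat)) :
  all (fun kh => kh \in l)
    [seq kh <- allpairs (fun k h => (k,h)) (iota 0 m) (iota 0 m) | ~~ leC cm (jl kh.1) (n - jl kh.2)] ->
  (forall k h, (k, h) \in l -> ~ ale (b k) (ainv (b h))) ->
  forall k h, k < m -> h < m -> ~~ leC cm (jl k) (n - jl h) -> ~ ale (b k) (ainv (b h)).
Proof.
move=> /allP Hl H k h Hk Hh Hn; apply: H; apply: Hl.
rewrite mem_filter Hn /=; apply/allpairsP; exists (k, h); by rewrite !mem_iota.
Qed.
End Gen.

Ltac nrm := rewrite ?inv_j ?inv_m ?invK.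
Section B8sCase.
Variable A : alg. Hypothesis PK : pseudo_kleene A.
Local Notation "x ∧ y" := (ameet x y) (at level 40, left associativity).
Local Notation "x ∨ y" := (ajoin x y) (at level 50, left associativity).
Local Notation "x '" := (ainv x) (at level 2).
Variables (u v : A).
Hypotheses (Huv : ale u v) (Huu : ale u (u ')) (Hf : ~ ale (v ∧ (u ∨ v ')) (u ∨ (v ∧ v '))).
Definition b8 k := nth (abot A) [:: u ∨ (v ∧ v '); v '; v ∧ (u ∨ v '); v; (u ∨ (v ∧ v ')) '] k.
Lemma b8_Hvu : ale (v ') (u '). Proof. exact: inv_le. Qed.
Lemma b8_sep : forall k h, (k,h) \in [:: (0, 3); (1, 1); (1, 4); (2, 3); (2, 4); (
          3, 0); (3, 2); (3, 3); (3, 4); (4, 1); (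
          4, 2); (4, 3); (4, 4)] -> ~ ale (b8 k) ((b8 h) ').
Proof.
have H1 := b8_Hvu.
move=> k h; rewrite !inE => Hkh H; apply: Hf.
have H' := inv_le PK H; rewrite ?(inv_j PK) ?(inv_m PK) ?(invK PK) in H'.
move: Hkh H H'.
do 12 (case/orP; [move/eqP=> [-> ->] /= H H'; rewrite ?(inv_j PK) ?(inv_m PK) ?(invK PK) in H H' *; solve [ls] | ]).
move/eqP=> [-> ->] H _; rewrite /b8 /= in H; have H' := inv_le PK H.
do 3 rewrite ?(inv_j PK) ?(inv_m PK) ?(invK PK) in H H' *; ls.
Qed.
Lemma b8s_quot : exists (S : A -> Prop) (th : A -> A -> Prop),
  [/\ subalgebra S, congruence S th & quot_iso S th B8s].
Proof.
have H1 := b8_Hvu.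
apply: (@quot_main A PK 7 cv8s cm8s cj8s 5 jl8s b8 rules8s gens8s);
  try (by vm_compute).
- apply: HR_of => //; rewrite /allRl /b8 /=.
  do 3 rewrite ?(inv_j PK) ?(inv_m PK) ?(invK PK).
  repeat split; ls.
- apply: HS_of; last exact: b8_sep.
  by vm_compute.
- move=> g; rewrite !inE => /orP [/eqP -> | /eqP ->] /=; rewrite ?(invK PK); exact: le_refl.
Qed.
End B8sCase.

Section B10Case.
Variable A : alg. Hypothesis PK : pseudo_kleene A.
Local Notation "x ∧ y" := (ameet x y) (at level 40, left associativity).
Local Notation "x ∨ y" := (ajoin x y) (at level 50, left associativity).
Local Notation "x '" := (ainv x) (at level 2).
Variables (x y : A).
Hypotheses (Hxy : ale x y)
  (NB : forall u v : A, ale u v -> ale u (u ') -> ale (v ∧ (u ∨ v ')) (u ∨ (v ∧ v ')))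
  (Hm : ~ ale ((x ' ∧ y) ∧ (x ' ∧ y) ') ((x ∧ x ') ∨ (y ∧ y '))).
Local Notation a := ((x ∧ x ') ∨ (y ∧ y ')).
Definition b10 k := nth (abot A) [:: x ∨ a; y ' ∨ a; (x ' ∧ y) ∧ (x ' ∧ y) '; (y ' ∨ a) '; (x ∨ a) '] k.

Ltac nrmall := do 3 rewrite ?(inv_j PK) ?(inv_m PK) ?(invK PK).

Lemma Hyx : ale (y ') (x '). Proof. exact: inv_le. Qed.
Lemma Kl1 : ale (x ∧ x ') (y ' ∨ y). Proof. rewrite (jC PK); exact: kleene. Qed.
Lemma Kl2 : ale (y ∧ y ') (x ' ∨ x). Proof. rewrite (jC PK); exact: kleene. Qed.
Lemma NB1 : ale (y ∧ ((x ∧ x ') ∨ y ')) a.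
Proof.
have H1 := Hyx.
have := NB (u := x ∧ x ') (v := y); nrmall => H; apply: H.
- ls.
- ls.
Qed.
Lemma NB2 : ale (x ' ∧ ((y ∧ y ') ∨ x)) a.
Proof.
have H1 := Hyx.
have := NB (u := y ∧ y ') (v := x '); nrmall => H.
apply: (le_trans PK (H _ _)); ls.
Qed.

Lemma NB1y : ale (y ∧ (y ' ∨ a)) a.
Proof. have H1 := NB1. ls. Qed.
Lemma NB2x : ale (x ' ∧ (x ∨ a)) a.
Proof. have H1 := NB2. ls. Qed.
Lemma L1 : ale x a -> ale ((x ' ∧ y) ∧ (x ∨ y ')) a.
Proof. move=> H; have H1 := NB1y. ls. Qed.
Lemma L1' : ale (y ') a -> ale ((x ' ∧ y) ∧ (x ∨ y ')) a.
Proof. move=> H; have H1 := NB2x. ls. Qed.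
Lemma HXX : ale ((x ∨ a) ∧ (x ∨ a) ') a.
Proof.
have H1 := NB2x. have H2 := Hyx. have H3 := Kl1. have H4 := Kl2. nrmall. ls.
Qed.
Lemma HYY : ale ((y ' ∨ a) ∧ (y ' ∨ a) ') a.
Proof.
have H1 := NB1y. have H2 := Hyx. have H3 := Kl1. have H4 := Kl2. nrmall. ls.
Qed.

Lemma b10_sep : forall k h, (k,h) \in [:: (0, 0); (0, 3); (1, 1); (1, 4); (2, 3); (
          2, 4); (3, 0); (3, 2); (3, 3); (3, 4); (
          4, 1); (4, 2); (4, 3); (4, 4)] -> ~ ale (b10 k) ((b10 h) ').
Proof.
have F1 := Hyx. have F2 := Kl1. have F3 := Kl2. have F4 := NB1y. have F5 := NB2x.
have F6 := HXX. have F7 := HYY. have F8 := L1. have F9 := L1'.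
move: F4 F5 F6 F7 F8 F9; nrmall => F4 F5 F6 F7 F8 F9.
move=> k h; rewrite !inE => Hkh H; apply: Hm.
move: Hkh H.
case/orP; [move/eqP=> [-> ->] H; rewrite /b10 /= in H; have H' := inv_le PK H; move: H H'; nrmall => H H'; apply: F8; ls | ].
case/orP; [move/eqP=> [-> ->] H; rewrite /b10 /= in H; have H' := inv_le PK H; move: H H'; nrmall => H H'; apply: F8; ls | ].
case/orP; [move/eqP=> [-> ->] H; rewrite /b10 /= in H; have H' := inv_le PK H; move: H H'; nrmall => H H'; apply: F9; ls | ].
case/orP; [move/eqP=> [-> ->] H; rewrite /b10 /= in H; have H' := inv_le PK H; move: H H'; nrmall => H H'; apply: F9; ls | ].
case/orP; [move/eqP=> [-> ->] H; rewrite /b10 /= in H; have H' := inv_le PK H; move: H H'; nrmall => H H'; apply: (le_trans PK _ F4); ls | ].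
case/orP; [move/eqP=> [-> ->] H; rewrite /b10 /= in H; have H' := inv_le PK H; move: H H'; nrmall => H H'; apply: (le_trans PK _ F5); ls | ].
case/orP; [move/eqP=> [-> ->] H; rewrite /b10 /= in H; have H' := inv_le PK H; move: H H'; nrmall => H H'; apply: F8; ls | ].
case/orP; [move/eqP=> [-> ->] H; rewrite /b10 /= in H; have H' := inv_le PK H; move: H H'; nrmall => H H'; apply: (le_trans PK _ F4); ls | ].
case/orP; [move/eqP=> [-> ->] H; rewrite /b10 /= in H; have H' := inv_le PK H; move: H H'; nrmall => H H'; apply: F8; ls | ].
case/orP; [move/eqP=> [-> ->] H; rewrite /b10 /= in H; have H' := inv_le PK H; move: H H'; nrmall => H H'; apply: (le_trans PK _ F5); ls | ].
case/orP; [move/eqP=> [-> ->] H; rewrite /b10 /= in H; have H' := inv_le PK H; move: H H'; nrmall => H H'; apply: F9; ls | ].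
case/orP; [move/eqP=> [-> ->] H; rewrite /b10 /= in H; have H' := inv_le PK H; move: H H'; nrmall => H H'; apply: (le_trans PK _ F5); ls | ].
case/orP; [move/eqP=> [-> ->] H; rewrite /b10 /= in H; have H' := inv_le PK H; move: H H'; nrmall => H H'; apply: (le_trans PK _ F5); ls | ].
move/eqP=> [-> ->] H; rewrite /b10 /= in H; have H' := inv_le PK H; move: H H'; nrmall => H H'; apply: F9; ls.
Qed.

Lemma Ha'X : ale (a ') ((x ∨ a) ∨ (x ∨ a) ').
Proof. have H := inv_le PK HXX; rewrite (inv_m PK) (invK PK) in H; apply: (le_trans PK H); ls. Qed.
Lemma Ha'Y : ale (a ') ((y ' ∨ a) ' ∨ (y ' ∨ a)).
Proof. have H := inv_le PK HYY; rewrite (inv_m PK) (invK PK) in H; apply: (le_trans PK H); ls. Qed.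
Lemma Ya' : ale ((y ' ∨ a) ') (a '). Proof. apply: (inv_le PK); exact: (j_r PK). Qed.
Lemma Xa' : ale ((x ∨ a) ') (a '). Proof. apply: (inv_le PK); exact: (j_r PK). Qed.

Lemma b10_quot : exists (S : A -> Prop) (th : A -> A -> Prop),
  [/\ subalgebra S, congruence S th & quot_iso S th B10].
Proof.
have F1 := Hyx. have F2 := Kl1. have F3 := Kl2.
apply: (@quot_main A PK 9 cv10 cm10 cj10 5 jl10 b10 rules10 gens10);
  try (by vm_compute).
- apply: HR_of => //; rewrite /allRl /b10 /= !(j0 PK).
  split; first by nrmall; ls.
  split; first by nrmall; ls.
  split; first by nrmall; ls.
  split; first by nrmall; ls.
  split; first by nrmall; ls.
  split; first exact: (le_trans PK Ya' Ha'X).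
  split => //; exact: (le_trans PK Xa' Ha'Y).
- apply: HS_of; last exact: b10_sep.
  by vm_compute.
- move=> g; rewrite !inE => /orP [/eqP -> | /eqP ->] /=; rewrite ?(invK PK); exact: le_refl.
Qed.
End B10Case.

Definition allPn (P : nat -> Prop) (l : seq nat) : Prop := foldr (fun a acc => P a /\ acc) True l.
Lemma allPnP P n : allPn P (iota 0 n) -> forall a, a < n -> P a.
Proof.
move=> H a Ha; have : a \in iota 0 n by rewrite mem_iota.
move: H; elim: (iota 0 n) => [|x l IH] //= [H1 H2]; rewrite inE => /orP [/eqP -> //|]; exact: IH.
Qed.

Section Emb.
Variable A : alg. Hypothesis PK : pseudo_kleene A.
Variables (n : nat) (cv : seq (nat * nat)) (cm cj : nat -> nat -> nat) (f : nat -> A).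
Hypotheses (CH9 : chk9 n cm cj) (CH12 : chk12 n cv cm cj)
  (Hm : forall a b, a <= n -> b <= n -> f (cm a b) = ameet (f a) (f b))
  (Hi : forall a, a <= n -> f (n - a) = ainv (f a))
  (H0 : f 0 = abot A)
  (Hinj : forall a b, a <= n -> b <= n -> f a = f b -> a = b).

Lemma emb_main : has_subalgebra_iso A (finalg n cv).
Proof.
pose F := fun c : 'I_n.+1 => f (val c).
have Hc : forall c : 'I_n.+1, val c <= n by move=> c; rewrite -ltnS ltn_ord.
have FM : forall c d : 'I_n.+1, F (@ameet (finalg n cv) c d) = ameet (F c) (F d).
  move=> c d; rewrite /F /= /fmeet.
  case: (CL4 CH12 (Hc c) (Hc d)) => -> _.
  case: (CL1 CH9 (Hc c) (Hc d)) => R _ _ _ _.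
  by rewrite inordK ?ltnS // Hm.
have FI : forall c : 'I_n.+1, F (@ainv (finalg n cv) c) = ainv (F c).
  by move=> c; rewrite /F /= subSS Hi ?Hc.
have FJ : forall c d : 'I_n.+1, F (@ajoin (finalg n cv) c d) = ajoin (F c) (F d).
  move=> c d; rewrite /F /= /fjoin.
  case: (CL4 CH12 (Hc c) (Hc d)) => _ ->.
  case: (CL1 CH9 (Hc c) (Hc d)) => _ R _ E _.
  rewrite inordK ?ltnS // E Hi; last by case: (CL1 CH9 (leq_subr c n) (leq_subr d n)).
  rewrite Hm ?leq_subr // !Hi // (inv_m PK) !(invK PK) //.
have F0 : F ord0 = abot A by [].
have F1 : F ord_max = atop A.
  rewrite /F /= -{1}(subn0 n) Hi // H0; exact: inv0.
exists (fun z => exists c, F c = z); split.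
- split.
  + by move=> x y [c <-] [d <-]; exists (@ameet (finalg n cv) c d).
  + by move=> x y [c <-] [d <-]; exists (@ajoin (finalg n cv) c d).
  + by move=> x [c <-]; exists (@ainv (finalg n cv) c).
  + by exists ord0.
  + by exists ord_max.
- exists F; split => //.
  + move=> c d; rewrite /F => E; apply: val_inj; exact: Hinj.
Qed.
End Emb.

Section SP1Case.
Variable A : alg. Hypothesis PK : pseudo_kleene A.
Local Notation "x ∧ y" := (ameet x y) (at level 40, left associativity).
Local Notation "x ∨ y" := (ajoin x y) (at level 50, left associativity).
Local Notation "x '" := (ainv x) (at level 2).
Variables (a u v : A).
Hypotheses (Hau : ale a u) (Huv : ale u v) (Hva : ale v (a ')) (Hav : ale a (v '))
  (Hvu : ale (v ') (u ')) (Hua : ale (u ') (a '))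
  (M1 : ale (u ∧ u ') a) (M2 : ale (u ∧ v ') a) (M3 : ale (v ∧ v ') a) (M4 : ale (v ∧ u ') a)
  (N1 : ~ ale u a) (N2 : ~ ale v u) (N3 : ~ ale (v ') a).

Lemma N1' : ~ ale (a ') (u '). Proof. move=> H; apply: N1; have := inv_le PK H; by rewrite !(invK PK). Qed.
Lemma N2' : ~ ale (u ') (v '). Proof. move=> H; apply: N2; have := inv_le PK H; by rewrite !(invK PK). Qed.
Lemma N3' : ~ ale (a ') v. Proof. move=> H; apply: N3; have := inv_le PK H; by rewrite !(invK PK). Qed.

Definition f8 k := nth (abot A) [:: abot A; a; u; v; v '; u '; a '; atop A] k.

Lemma b8_emb : ~ ale a (abot A) -> has_subalgebra_iso A B8.
Proof.
move=> N5.
have N5' : ~ ale (atop A) (a ').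
  move=> H; apply: N5; have := inv_le PK H; by rewrite (invK PK) (inv1 PK).
have N1'' := N1'. have N2'' := N2'. have N3'' := N3'.
apply: (@emb_main A PK 7 cv8 cm8 cj8 f8); try (by vm_compute).
- have HH : allPn (fun a1 => allPn (fun b1 => f8 (cm8 a1 b1) = f8 a1 ∧ f8 b1) (iota 0 8)) (iota 0 8).
    rewrite /f8 /cm8 /TM8 /=.
    repeat split; leq.
  move=> a1 b1 Ha Hb; exact: (allPnP (allPnP HH Ha) Hb).
- have HH : allPn (fun a1 => f8 (7 - a1) = (f8 a1) ') (iota 0 8).
    rewrite /f8 /=; by rewrite ?(invK PK) ?(inv0 PK) ?(inv1 PK).
  move=> a1 Ha; exact: (allPnP HH Ha).
- have HH : allPn (fun a1 => allPn (fun b1 => a1 < b1 -> f8 a1 <> f8 b1) (iota 0 8)) (iota 0 8).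
  have Hne01 : f8 0 <> f8 1 by rewrite /f8 /= => E; have E1 := le_eq PK E; have E2 := le_eq PK (esym E); apply: N5; ls.
  have Hne02 : f8 0 <> f8 2 by rewrite /f8 /= => E; have E1 := le_eq PK E; have E2 := le_eq PK (esym E); apply: N1; ls.
  have Hne03 : f8 0 <> f8 3 by rewrite /f8 /= => E; have E1 := le_eq PK E; have E2 := le_eq PK (esym E); apply: N2; ls.
  have Hne04 : f8 0 <> f8 4 by rewrite /f8 /= => E; have E1 := le_eq PK E; have E2 := le_eq PK (esym E); apply: N3; ls.
  have Hne05 : f8 0 <> f8 5 by rewrite /f8 /= => E; have E1 := le_eq PK E; have E2 := le_eq PK (esym E); apply: N2''; ls.
  have Hne06 : f8 0 <> f8 6 by rewrite /f8 /= => E; have E1 := le_eq PK E; have E2 := le_eq PK (esym E); apply: N1; ls.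
  have Hne07 : f8 0 <> f8 7 by rewrite /f8 /= => E; have E1 := le_eq PK E; have E2 := le_eq PK (esym E); apply: N1; apply: (le_trans PK (le_top PK _)); apply: (le_trans PK E2); ls.
  have Hne12 : f8 1 <> f8 2 by rewrite /f8 /= => E; have E1 := le_eq PK E; have E2 := le_eq PK (esym E); apply: N1; ls.
  have Hne13 : f8 1 <> f8 3 by rewrite /f8 /= => E; have E1 := le_eq PK E; have E2 := le_eq PK (esym E); apply: N2; ls.
  have Hne14 : f8 1 <> f8 4 by rewrite /f8 /= => E; have E1 := le_eq PK E; have E2 := le_eq PK (esym E); apply: N3; ls.
  have Hne15 : f8 1 <> f8 5 by rewrite /f8 /= => E; have E1 := le_eq PK E; have E2 := le_eq PK (esym E); apply: N2''; ls.
  have Hne16 : f8 1 <> f8 6 by rewrite /f8 /= => E; have E1 := le_eq PK E; have E2 := le_eq PK (esym E); apply: N1; ls.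
  have Hne17 : f8 1 <> f8 7 by rewrite /f8 /= => E; have E1 := le_eq PK E; have E2 := le_eq PK (esym E); apply: N1; ls.
  have Hne23 : f8 2 <> f8 3 by rewrite /f8 /= => E; have E1 := le_eq PK E; have E2 := le_eq PK (esym E); apply: N2; ls.
  have Hne24 : f8 2 <> f8 4 by rewrite /f8 /= => E; have E1 := le_eq PK E; have E2 := le_eq PK (esym E); apply: N1; ls.
  have Hne25 : f8 2 <> f8 5 by rewrite /f8 /= => E; have E1 := le_eq PK E; have E2 := le_eq PK (esym E); apply: N1; ls.
  have Hne26 : f8 2 <> f8 6 by rewrite /f8 /= => E; have E1 := le_eq PK E; have E2 := le_eq PK (esym E); apply: N2; ls.
  have Hne27 : f8 2 <> f8 7 by rewrite /f8 /= => E; have E1 := le_eq PK E; have E2 := le_eq PK (esym E); apply: N2; ls.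
  have Hne34 : f8 3 <> f8 4 by rewrite /f8 /= => E; have E1 := le_eq PK E; have E2 := le_eq PK (esym E); apply: N2; ls.
  have Hne35 : f8 3 <> f8 5 by rewrite /f8 /= => E; have E1 := le_eq PK E; have E2 := le_eq PK (esym E); apply: N2; ls.
  have Hne36 : f8 3 <> f8 6 by rewrite /f8 /= => E; have E1 := le_eq PK E; have E2 := le_eq PK (esym E); apply: N3''; ls.
  have Hne37 : f8 3 <> f8 7 by rewrite /f8 /= => E; have E1 := le_eq PK E; have E2 := le_eq PK (esym E); apply: N3''; ls.
  have Hne45 : f8 4 <> f8 5 by rewrite /f8 /= => E; have E1 := le_eq PK E; have E2 := le_eq PK (esym E); apply: N2''; ls.
  have Hne46 : f8 4 <> f8 6 by rewrite /f8 /= => E; have E1 := le_eq PK E; have E2 := le_eq PK (esym E); apply: N2''; ls.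
  have Hne47 : f8 4 <> f8 7 by rewrite /f8 /= => E; have E1 := le_eq PK E; have E2 := le_eq PK (esym E); apply: N2''; ls.
  have Hne56 : f8 5 <> f8 6 by rewrite /f8 /= => E; have E1 := le_eq PK E; have E2 := le_eq PK (esym E); apply: N1''; ls.
  have Hne57 : f8 5 <> f8 7 by rewrite /f8 /= => E; have E1 := le_eq PK E; have E2 := le_eq PK (esym E); apply: N1''; ls.
  have Hne67 : f8 6 <> f8 7 by rewrite /f8 /= => E; have E1 := le_eq PK E; have E2 := le_eq PK (esym E); apply: N5'; ls.
    rewrite /=; repeat split => //.
  move=> a1 b1 Ha Hb E; case: (ltngtP a1 b1) => // H.
  + by case: (allPnP (allPnP HH Ha) Hb H E).
  + by case: (allPnP (allPnP HH Hb) Ha H (esym E)).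
Qed.
End SP1Case.

Section SP1b.
Variable A : alg. Hypothesis PK : pseudo_kleene A.
Local Notation "x ∧ y" := (ameet x y) (at level 40, left associativity).
Local Notation "x ∨ y" := (ajoin x y) (at level 50, left associativity).
Local Notation "x '" := (ainv x) (at level 2).
Variables (u v : A).
Hypotheses (Huv : ale u v) (Hvu : ale (v ') (u '))
  (M1 : ale (u ∧ u ') (abot A)) (M2 : ale (u ∧ v ') (abot A)) (M3 : ale (v ∧ v ') (abot A))
  (M4 : ale (v ∧ u ') (abot A))
  (N1 : ~ ale u (abot A)) (N2 : ~ ale v u) (N3 : ~ ale (v ') (abot A)).

Definition f6 k := nth (abot A) [:: abot A; u; v; v '; u '; atop A] k.

Lemma b6_emb : has_subalgebra_iso A B6.
Proof.
have N1' : ~ ale (atop A) (u '). move=> H; apply: N1; have := inv_le PK H; by rewrite (invK PK) (inv1 PK).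
have N2' : ~ ale (u ') (v '). move=> H; apply: N2; have := inv_le PK H; by rewrite !(invK PK).
have N3' : ~ ale (atop A) v. move=> H; apply: N3; have := inv_le PK H; by rewrite (inv1 PK).
have Hbu := bot_le PK u.
apply: (@emb_main A PK 5 cv6 cm6 cj6 f6); try (by vm_compute).
- have HH : allPn (fun a1 => allPn (fun b1 => f6 (cm6 a1 b1) = f6 a1 ∧ f6 b1) (iota 0 6)) (iota 0 6).
    rewrite /f6 /cm6 /TM6 /=.
    repeat split; leq.
  move=> a1 b1 Ha Hb; exact: (allPnP (allPnP HH Ha) Hb).
- have HH : allPn (fun a1 => f6 (5 - a1) = (f6 a1) ') (iota 0 6).
    rewrite /f6 /=; by rewrite ?(invK PK) ?(inv0 PK) ?(inv1 PK).
  move=> a1 Ha; exact: (allPnP HH Ha).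
- have HH : allPn (fun a1 => allPn (fun b1 => a1 < b1 -> f6 a1 <> f6 b1) (iota 0 6)) (iota 0 6).
  have Hne01 : f6 0 <> f6 1 by rewrite /f6 /= => E; have E1 := le_eq PK E; have E2 := le_eq PK (esym E); apply: N1; ls.
  have Hne02 : f6 0 <> f6 2 by rewrite /f6 /= => E; have E1 := le_eq PK E; have E2 := le_eq PK (esym E); apply: N2; ls.
  have Hne03 : f6 0 <> f6 3 by rewrite /f6 /= => E; have E1 := le_eq PK E; have E2 := le_eq PK (esym E); apply: N3; ls.
  have Hne04 : f6 0 <> f6 4 by rewrite /f6 /= => E; have E1 := le_eq PK E; have E2 := le_eq PK (esym E); apply: N2'; ls.
  have Hne05 : f6 0 <> f6 5 by rewrite /f6 /= => E; have E1 := le_eq PK E; have E2 := le_eq PK (esym E); apply: N1; apply: (le_trans PK (le_top PK _)); apply: (le_trans PK E2); ls.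
  have Hne12 : f6 1 <> f6 2 by rewrite /f6 /= => E; have E1 := le_eq PK E; have E2 := le_eq PK (esym E); apply: N2; ls.
  have Hne13 : f6 1 <> f6 3 by rewrite /f6 /= => E; have E1 := le_eq PK E; have E2 := le_eq PK (esym E); apply: N1; ls.
  have Hne14 : f6 1 <> f6 4 by rewrite /f6 /= => E; have E1 := le_eq PK E; have E2 := le_eq PK (esym E); apply: N1; ls.
  have Hne15 : f6 1 <> f6 5 by rewrite /f6 /= => E; have E1 := le_eq PK E; have E2 := le_eq PK (esym E); apply: N2; ls.
  have Hne23 : f6 2 <> f6 3 by rewrite /f6 /= => E; have E1 := le_eq PK E; have E2 := le_eq PK (esym E); apply: N2; ls.
  have Hne24 : f6 2 <> f6 4 by rewrite /f6 /= => E; have E1 := le_eq PK E; have E2 := le_eq PK (esym E); apply: N2; ls.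
  have Hne25 : f6 2 <> f6 5 by rewrite /f6 /= => E; have E1 := le_eq PK E; have E2 := le_eq PK (esym E); apply: N3'; ls.
  have Hne34 : f6 3 <> f6 4 by rewrite /f6 /= => E; have E1 := le_eq PK E; have E2 := le_eq PK (esym E); apply: N2'; ls.
  have Hne35 : f6 3 <> f6 5 by rewrite /f6 /= => E; have E1 := le_eq PK E; have E2 := le_eq PK (esym E); apply: N2'; ls.
  have Hne45 : f6 4 <> f6 5 by rewrite /f6 /= => E; have E1 := le_eq PK E; have E2 := le_eq PK (esym E); apply: N1'; ls.
    rewrite /=; repeat split => //.
  move=> a1 b1 Ha Hb E; case: (ltngtP a1 b1) => // H.
  + by case: (allPnP (allPnP HH Ha) Hb H E).
  + by case: (allPnP (allPnP HH Hb) Ha H (esym E)).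
Qed.
End SP1b.

Section Main.
Variable A : alg. Hypothesis PK : pseudo_kleene A.
Local Notation "x ∧ y" := (ameet x y) (at level 40, left associativity).
Local Notation "x ∨ y" := (ajoin x y) (at level 50, left associativity).
Local Notation "x '" := (ainv x) (at level 2).
Ltac nrmall := do 3 rewrite ?(inv_j PK) ?(inv_m PK) ?(invK PK).

Lemma sp1_holds (x y : A) : ~ has_subalgebra_iso A B6 -> ~ has_subalgebra_iso A B8 ->
  ale x y -> x ' ∧ y = (x ∧ x ') ∨ (y ∧ y ') -> y ∧ (x ∨ x ') = x ∨ (y ∧ y ').
Proof.
move=> NB6 NB8 Hxy Hp.
have Hyx : ale (y ') (x ') by exact: inv_le.
have K1 : ale (y ∧ y ') (x ' ∨ x) by rewrite (jC PK); exact: kleene.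
have K2 : ale (x ∧ x ') (y ' ∨ y) by rewrite (jC PK); exact: kleene.
have Hp' : ale (x ' ∧ y) ((x ∧ x ') ∨ (y ∧ y ')) by rewrite Hp; exact: le_refl.
have Huv : ale (x ∨ (y ∧ y ')) (y ∧ (x ∨ x ')) by ls.
apply: (le_anti PK) => //; apply: NNPP => Hn.
set a := (x ∧ x ') ∨ (y ∧ y ').
set u := x ∨ (y ∧ y ').
set v := y ∧ (x ∨ x ').
have Hau : ale a u by rewrite /a /u; ls.
have Hva : ale v (a ') by rewrite /a /v; nrmall; ls.
have Hav : ale a (v ') by rewrite /a /v; nrmall; ls.
have Hvu : ale (v ') (u ') by exact: inv_le.
have Hua : ale (u ') (a ') by exact: inv_le.
have M1 : ale (u ∧ u ') a by rewrite /a /u; nrmall; ls.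
have M2 : ale (u ∧ v ') a by rewrite /a /u /v; nrmall; ls.
have M3 : ale (v ∧ v ') a by rewrite /a /v; nrmall; ls.
have M4 : ale (v ∧ u ') a by rewrite /a /u /v; nrmall; ls.
have Hax : ale a (x ') by rewrite /a; ls.
have N1 : ~ ale u a.
  move=> H; apply: Hn; rewrite -/u -/v.
  have H1 : ale x (x ') by apply: (le_trans PK _ Hax); apply: (le_trans PK _ H); rewrite /u; ls.
  apply: (le_trans PK _ Hau); apply: (le_trans PK _ Hp'); rewrite /v; ls.
have N3 : ~ ale (v ') a.
  move=> H; apply: Hn; rewrite -/u -/v.
  have H1 : ale (y ') y.
    apply: (le_trans PK (_ : ale (y ') (v '))); first by rewrite /v; nrmall; ls.
    apply: (le_trans PK H); rewrite /a; ls.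
  have H2 : ale (u ') (v ').
    apply: (le_trans PK _ Hav); apply: (le_trans PK _ Hp'); rewrite /u; nrmall; ls.
  by have := inv_le PK H2; rewrite !(invK PK).
have N2 : ~ ale v u by [].
case: (classic (ale a (abot A))) => Ha0.
- apply: NB6; apply: (@b6_emb A PK u v) => //.
  + exact: le_trans M1 Ha0.
  + exact: le_trans M2 Ha0.
  + exact: le_trans M3 Ha0.
  + exact: le_trans M4 Ha0.
  + move=> H; apply: N1; apply: (le_trans PK H); exact: (bot_le PK).
  + move=> H; apply: N3; apply: (le_trans PK H); exact: (bot_le PK).
- apply: NB8; exact: (@b8_emb A PK a u v).
Qed.

Definition NQ := ~ (exists (S : A -> Prop) (th : A -> A -> Prop),
            [/\ subalgebra S, congruence S th & (quot_iso S th B8s \/ quot_iso S th B10)]).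

Lemma sp2_holds (x y : A) : NQ -> ale x y ->
  (x ∧ x ') ∨ (y ∧ y ') = (x ' ∧ y) ∧ (x ' ∧ y) '.
Proof.
move=> HQ Hxy.
have Hyx : ale (y ') (x ') by exact: inv_le.
apply: (le_anti PK); first by nrmall; ls.
apply: NNPP => Hm.
case: (classic (exists u v : A, [/\ ale u v, ale u (u ') & ~ ale (v ∧ (u ∨ v ')) (u ∨ (v ∧ v '))])).
- case=> u [v [H1 H2 H3]]; apply: HQ.
  case: (b8s_quot PK H1 H2 H3) => S [th [HS Hth Hq]].
  by exists S, th; split => //; left.
- move=> Hno; apply: HQ.
  have NB : forall u v : A, ale u v -> ale u (u ') -> ale (v ∧ (u ∨ v ')) (u ∨ (v ∧ v ')).
    move=> u v H1 H2; apply: NNPP => H3; apply: Hno; by exists u, v.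
  case: (b10_quot PK Hxy NB Hm) => S [th [HS Hth Hq]].
  by exists S, th; split => //; right.
Qed.
End Main.

Section Fwd.
Variable A : alg. Hypothesis PK : pseudo_kleene A.
Local Notation "x ∧ y" := (ameet x y) (at level 40, left associativity).
Local Notation "x ∨ y" := (ajoin x y) (at level 50, left associativity).
Local Notation "x '" := (ainv x) (at level 2).

Lemma no_sub (C : alg) (cx cy : C) : super_paraorthomodular A ->
  ameet cx cy = cx ->
  ameet (ainv cx) cy = ajoin (ameet cx (ainv cx)) (ameet cy (ainv cy)) ->
  ameet cy (ajoin cx (ainv cx)) <> ajoin cx (ameet cy (ainv cy)) ->
  ~ has_subalgebra_iso A C.
Proof.
case=> SP1 _ E1 E2 E3 [S [HS [f [finj fS fM fJ [fI f0 f1]]]]].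
have Hle : ale (f cx) (f cy) by rewrite /ale -fM E1.
have Hp : ainv (f cx) ∧ f cy = (f cx ∧ ainv (f cx)) ∨ (f cy ∧ ainv (f cy)).
  by rewrite -!fI -!fM -fJ E2.
have := SP1 _ _ Hle Hp; rewrite -!fI -!fM -!fJ -fM => /finj; exact: E3.
Qed.

Lemma no_quot (C : alg) (S : A -> Prop) th (cx cy : C) : super_paraorthomodular A ->
  subalgebra S -> quot_iso S th C ->
  ameet cx cy = cx ->
  ajoin (ameet cx (ainv cx)) (ameet cy (ainv cy)) <>
    ameet (ameet (ainv cx) cy) (ainv (ameet (ainv cx) cy)) -> False.
Proof.
case=> _ SP2 [SM SJ SI S0 S1] [g [gker gsurj gM gJ [gI g0 g1]]] E1 E2.
case: (gsurj cx) => s0 [Hs0 Es]; case: (gsurj cy) => t0 [Ht0 Et].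
have Hle : ale (s0 ∧ t0) t0 by rewrite /ale -(mA PK) (mI PK).
have := SP2 _ _ Hle; move/(congr1 g).
have Hs : S (s0 ∧ t0) by apply SM.
rewrite !(gJ, gM, gI) //.
all: try (repeat (first [assumption | apply SM | apply SJ | apply SI])).
by rewrite Es Et E1.
Qed.
End Fwd.

Lemma nth_le n (s : seq nat) : all (fun z => z <= n) s -> nth 0 s 0 <= n.
Proof. by case: s => [|z s] //= /andP []. Qed.
Lemma fmeetn_le n cv x y : fmeetn n cv x y <= n.
Proof. apply: nth_le; apply/allP => z; rewrite mem_filter mem_iota => /andP [_ /andP [_]]; by rewrite add0n ltnS. Qed.
Lemma fjoinn_le n cv x y : fjoinn n cv x y <= n.
Proof. apply: nth_le; apply/allP => z; rewrite mem_filter mem_iota => /andP [_ /andP [_]]; by rewrite add0n ltnS. Qed.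

Section Ev.
Variables (n : nat) (cv : seq (nat * nat)).
Inductive tm := tV of 'I_n.+1 | tM of tm & tm | tJ of tm & tm | tI of tm.
Fixpoint evC (t : tm) : finalg n cv :=
  match t with
  | tV k => k
  | tM s u => ameet (evC s) (evC u)
  | tJ s u => ajoin (evC s) (evC u)
  | tI s => ainv (evC s)
  end.
Fixpoint evN (t : tm) : nat :=
  match t with
  | tV k => nat_of_ord k
  | tM s u => fmeetn n cv (evN s) (evN u)
  | tJ s u => fjoinn n cv (evN s) (evN u)
  | tI s => n - evN s
  end.
Lemma evNC t : nat_of_ord (evC t) = evN t.
Proof.
elim: t => [k|s IHs u IHu|s IHs u IHu|s IHs] //=.
- by rewrite /fmeet inordK ?ltnS ?fmeetn_le // IHs IHu.
- by rewrite /fjoin inordK ?ltnS ?fjoinn_le // IHs IHu.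
- by rewrite subSS IHs.
Qed.
Lemma evEq t1 t2 : evN t1 == evN t2 -> evC t1 = evC t2.
Proof. move/eqP => E; apply: ord_inj; by rewrite !evNC. Qed.
Lemma evNeq t1 t2 : evN t1 != evN t2 -> evC t1 <> evC t2.
Proof. move/eqP => E E'; apply: E; by rewrite -!evNC E'. Qed.
End Ev.

Section FinFwd.
Variable A : alg. Hypothesis PK : pseudo_kleene A.
Variables (n : nat) (cv : seq (nat * nat)) (cx cy : 'I_n.+1).
Let x := tV cx. Let y := tV cy.
Lemma no_sub_fin : super_paraorthomodular A ->
  evN cv (tM x y) == evN cv x ->
  evN cv (tM (tI x) y) == evN cv (tJ (tM x (tI x)) (tM y (tI y))) ->
  evN cv (tM y (tJ x (tI x))) != evN cv (tJ x (tM y (tI y))) ->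
  ~ has_subalgebra_iso A (finalg n cv).
Proof.
move=> SP E1 E2 E3.
apply: (@no_sub A (finalg n cv) cx cy SP).
- exact: (evEq E1).
- exact: (evEq E2).
- exact: (evNeq E3).
Qed.
Lemma no_quot_fin (S : A -> Prop) (th : A -> A -> Prop) : super_paraorthomodular A -> subalgebra S -> quot_iso S th (finalg n cv) ->
  evN cv (tM x y) == evN cv x ->
  evN cv (tJ (tM x (tI x)) (tM y (tI y))) != evN cv (tM (tM (tI x) y) (tI (tM (tI x) y))) -> False.
Proof.
move=> SP HS Hq E1 E2.
apply: (@no_quot A PK (finalg n cv) S th cx cy SP HS Hq).
- exact: (evEq E1).
- exact: (evNeq E2).
Qed.
End FinFwd.

Theorem theorem4p1 (A : alg) :
  pseudo_kleene A ->
  (super_paraorthomodular A <->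
   [/\ ~ has_subalgebra_iso A B6,
       ~ has_subalgebra_iso A B8 &
       ~ (exists (S : A -> Prop) (th : A -> A -> Prop),
            [/\ subalgebra S, congruence S th &
                (quot_iso S th B8s \/ quot_iso S th B10)])]).
Proof.
move=> PK; split.
- move=> SP; split.
  + by apply: (@no_sub_fin A 5 _ (@Ordinal 6 1 isT) (@Ordinal 6 2 isT) SP); vm_compute.
  + by apply: (@no_sub_fin A 7 _ (@Ordinal 8 2 isT) (@Ordinal 8 3 isT) SP); vm_compute.
  + case=> S [th [HS Hth [Hq|Hq]]].
    * by apply: (@no_quot_fin A PK 7 _ (@Ordinal 8 1 isT) (@Ordinal 8 5 isT) S th SP HS Hq); vm_compute.
    * by apply: (@no_quot_fin A PK 9 _ (@Ordinal 10 1 isT) (@Ordinal 10 7 isT) S th SP HS Hq); vm_compute.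
- case=> NB6 NB8 NQ; split.
  + move=> x y Hxy Hp; exact: (sp1_holds PK NB6 NB8 Hxy Hp).
  + move=> x y Hxy; exact: (sp2_holds PK NQ Hxy).
Qed.
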